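(* Let $\varphi=\frac{1+\sqrt5}{2}$ and for every integer $k$ let $F_k=\frac{\varphi^k-(-1/\varphi)^k}{\varphi+1/\varphi}$. On the complex vector space with basis $\{|n_1,n_2\rangle:n_1,n_2\ge0\}$ define, for $i=1,2$, operators $N_i$, $b_i$, $b_i^+$ acting on the $i$-th index by $N_1|n_1,n_2\rangle=n_1|n_1,n_2\rangle$, $b_1^+|n_1,n_2\rangle=\sqrt{F_{n_1+1}}|n_1+1,n_2\rangle$, $b_1|n_1,n_2\rangle=\sqrt{F_{n_1}}|n_1-1,n_2\rangle$ (zero if $n_1=0$), and analogously for index 2. Let $$J_+^F=b_1^+b_2,\qquad J_-^F=b_2^+b_1,\qquad J_z^F=\frac{N_1-N_2}{2},$$ and let $(-1)^{N_i}$, $F_{2J_z}$, $F_{-2J_z}$ be the diagonal operators acting on $|n_1,n_2\rangle$ by $(-1)^{n_i}$, $F_{n_1-n_2}$, $F_{n_2-n_1}$ respectively. Then $$[J_+^F,J_-^F]=(-1)^{N_2}F_{2J_z}=-(-1)^{N_1}F_{-2J_z},\qquad [J_z^F,J_\pm^F]=\pm J_\pm^F.$$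
   Context: $[A,B]=AB-BA$. *)

(* Defs.v *)
From HB Require Import structures.
From mathcomp Require Import all_boot all_order all_algebra.
From mathcomp Require Import reals complex.
Set Implicit Arguments. Unset Strict Implicit. Unset Printing Implicit Defensive.
Import Order.TTheory GRing.Theory Num.Theory.
Local Open Scope ring_scope.
Local Open Scope complex_scope.

Section Fib.
Variable R : realType.

Definition phi : R := (1 + Num.sqrt 5) / 2.

Definition Fib (k : int) : R :=
  (phi ^ k - (- phi^-1) ^ k) / (phi + phi^-1).

(* Vectors: coefficient functions (n1,n2) |-> coefficient of |n1,n2>. *)
Definition vec := nat -> nat -> R[i].
Definition op := vec -> vec.

Definition csqrtF (n : nat) : R[i] := (Num.sqrt (Fib n%:Z))%:C.

Definition N1 : op := fun v m1 m2 => m1%:R * v m1 m2.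
Definition N2 : op := fun v m1 m2 => m2%:R * v m1 m2.

(* b1^+ |n1,n2> = sqrt(F_{n1+1}) |n1+1,n2>, extended linearly (coefficientwise) *)
Definition bp1 : op := fun v m1 m2 =>
  if m1 is m.+1 then csqrtF m1 * v m m2 else 0.
Definition bp2 : op := fun v m1 m2 =>
  if m2 is m.+1 then csqrtF m2 * v m1 m else 0.

(* b1 |n1,n2> = sqrt(F_{n1}) |n1-1,n2> (zero if n1 = 0) *)
Definition b1 : op := fun v m1 m2 => csqrtF m1.+1 * v m1.+1 m2.
Definition b2 : op := fun v m1 m2 => csqrtF m2.+1 * v m1 m2.+1.

Definition opmul (A B : op) : op := fun v => A (B v).
Definition opadd (A B : op) : op := fun v m1 m2 => A v m1 m2 + B v m1 m2.
Definition opopp (A : op) : op := fun v m1 m2 => - A v m1 m2.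
Definition opscale (c : R[i]) (A : op) : op := fun v m1 m2 => c * A v m1 m2.

Definition comm (A B : op) : op := opadd (opmul A B) (opopp (opmul B A)).

Definition Jp : op := opmul bp1 b2.
Definition Jm : op := opmul bp2 b1.
Definition Jz : op := opscale (2%:R)^-1 (opadd N1 (opopp N2)).

Definition sgnN1 : op := fun v m1 m2 => (-1) ^+ m1 * v m1 m2.
Definition sgnN2 : op := fun v m1 m2 => (-1) ^+ m2 * v m1 m2.
Definition F2Jz : op := fun v m1 m2 => (Fib (m1%:Z - m2%:Z))%:C * v m1 m2.
Definition Fm2Jz : op := fun v m1 m2 => (Fib (m2%:Z - m1%:Z))%:C * v m1 m2.

End Fib.

(* Main.v *)
Require Import Defs.
From HB Require Import structures.
From mathcomp Require Import all_boot all_order all_algebra.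
From mathcomp Require Import reals complex.
From mathcomp Require Import ring lra.
From Stdlib Require Import FunctionalExtensionality.
Import Order.TTheory GRing.Theory Num.Theory.
Local Open Scope ring_scope.
Local Open Scope complex_scope.

Section S.
Variable R : realType.

Lemma phi_gt0 : 0 < phi R.
Proof.
rewrite /phi divr_gt0 //; apply: ltr_pwDl => //; exact: sqrtr_ge0.
Qed.

Lemma phi_neq0 : phi R != 0.
Proof. by rewrite gt_eqF // phi_gt0. Qed.

Lemma d_neq0 : phi R + (phi R)^-1 != 0.
Proof. by rewrite gt_eqF // addr_gt0 ?invr_gt0 ?phi_gt0. Qed.

Lemma phi2 : phi R ^+ 2 = phi R + 1.
Proof.
have h : Num.sqrt (5:R) * Num.sqrt 5 = 5 by rewrite -expr2 sqr_sqrtr.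
rewrite /phi; set s := Num.sqrt 5 in h *.
apply/eqP; rewrite -subr_eq0; apply/eqP.
have -> : ((1 + s) / 2) ^+ 2 - ((1 + s) / 2 + 1) = (s * s - 5) / 4.
  rewrite expr2; field.
  by [].
by rewrite h subrr mul0r.
Qed.

Lemma psiE (k : nat) : (- (phi R)^-1) ^+ k = (-1) ^+ k * ((phi R) ^+ k)^-1.
Proof. by rewrite -[X in X ^+ k]mulN1r exprMn exprVn. Qed.

Lemma Fib_nat (n : nat) : Fib R n%:Z =
  ((phi R) ^+ n - (-1) ^+ n * ((phi R) ^+ n)^-1) / (phi R + (phi R)^-1).
Proof. by rewrite /Fib -psiE. Qed.

Lemma Fib_rec n : Fib R n.+2%:Z = Fib R n.+1%:Z + Fib R n%:Z.
Proof.
rewrite !Fib_nat !exprS.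
have h := phi2; have h0 := phi_neq0; have hd := d_neq0.
have hs : (-1 : R) ^+ n != 0 by rewrite expf_neq0 // oppr_eq0 oner_eq0.
have ha : phi R ^+ n != 0 by rewrite expf_neq0.
rewrite expr2 in h. have hp := phi_gt0.
set p := phi R in h h0 hd ha hp *; set a := p ^+ n in ha *; set s := (-1) ^+ n in hs *.
apply/eqP; rewrite -subr_eq0; apply/eqP.
apply: (@eq_trans _ _ ((p * p - p - 1) * (a + s / (p * p * a)) / (p + p^-1))).
  clearbody s a p. field. by rewrite h0 ha gt_eqF ?addr_gt0 ?mulr_gt0.
rewrite h; have -> : p + 1 - p - 1 = 0 by ring.
by rewrite !mul0r.
Qed.

Lemma Fib_ge0 n : 0 <= Fib R n%:Z.
Proof.
suff : 0 <= Fib R n%:Z /\ 0 <= Fib R n.+1%:Z by case.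
elim: n => [|n [h1 h2]].
  rewrite !Fib_nat !expr0 !expr1 mul1r invr1 subrr mul0r; split => //.
  rewrite mulN1r opprK divff ?d_neq0 //.
by split => //; rewrite Fib_rec addr_ge0.
Qed.

Lemma sqF n : csqrtF R n * csqrtF R n = (Fib R n%:Z)%:C.
Proof. by rewrite /csqrtF -rmorphM -expr2 sqr_sqrtr // Fib_ge0. Qed.

Lemma Fib_diff (m n : nat) : Fib R (m%:Z - n%:Z) =
  ((phi R) ^+ m / (phi R) ^+ n -
   (-1) ^+ m * ((phi R) ^+ m)^-1 / ((-1) ^+ n * ((phi R) ^+ n)^-1)) / (phi R + (phi R)^-1).
Proof.
have u1 : phi R \is a GRing.unit by rewrite unitfE phi_neq0.
have u2 : - (phi R)^-1 \is a GRing.unit by rewrite unitfE oppr_eq0 invr_eq0 phi_neq0.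
by rewrite /Fib !exprzDr // -!exprnN -!psiE.
Qed.

Lemma docagne (m n : nat) :
  Fib R m%:Z * Fib R n.+1%:Z - Fib R m.+1%:Z * Fib R n%:Z
  = (-1) ^+ n * Fib R (m%:Z - n%:Z).
Proof.
rewrite Fib_diff !Fib_nat !exprS.
have h0 := phi_neq0; have hd := d_neq0.
have hs : (-1 : R) ^+ n != 0 by rewrite expf_neq0 // oppr_eq0 oner_eq0.
have hsm : (-1 : R) ^+ m != 0 by rewrite expf_neq0 // oppr_eq0 oner_eq0.
have ha : phi R ^+ n != 0 by rewrite expf_neq0.
have hb : phi R ^+ m != 0 by rewrite expf_neq0.
have hp := phi_gt0.
move: hd; set p := phi R in h0 ha hb hp *; move=> hd.
set a := p ^+ n in ha *; set b := p ^+ m in hb *.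
set s := (-1) ^+ n in hs *; set sm := (-1) ^+ m in hsm *.
clearbody s sm a b p. field.
by rewrite h0 ha hb hs gt_eqF ?addr_gt0 ?mulr_gt0.
Qed.

Lemma Fib_neg (k : nat) : Fib R (- k%:Z) = - (-1) ^+ k * Fib R k%:Z.
Proof.
have := Fib_diff 0 k; rewrite add0r => ->; rewrite Fib_nat !expr0.
have h0 := phi_neq0; have hd := d_neq0.
have hs : (-1 : R) ^+ k != 0 by rewrite expf_neq0 // oppr_eq0 oner_eq0.
have ha : phi R ^+ k != 0 by rewrite expf_neq0.
have ss : (-1 : R) ^+ k * (-1) ^+ k = 1 by rewrite -exprMn mulN1r opprK expr1n.
have hp := phi_gt0.
move: hd; set p := phi R in h0 ha hp *; move=> hd.
set a := p ^+ k in ha *; set s := (-1) ^+ k in hs ss *.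
clearbody s a p.
apply/eqP; rewrite -subr_eq0; apply/eqP.
apply: (@eq_trans _ _ ((1 - s * s) * (1 / a - a / s) / (p + p^-1))).
  field. by rewrite h0 ha hs gt_eqF ?addr_gt0 ?mulr_gt0.
by rewrite ss subrr !mul0r.
Qed.

Lemma Fib0 : Fib R 0%:Z = 0.
Proof. by rewrite Fib_nat !expr0 invr1 mulr1 subrr mul0r. Qed.

Lemma sgnswap (m n : nat) :
  (-1) ^+ n * Fib R (m%:Z - n%:Z) = - ((-1) ^+ m * Fib R (n%:Z - m%:Z)).
Proof.
rewrite !Fib_diff.
have h0 := phi_neq0; have hd := d_neq0.
have hs : (-1 : R) ^+ n != 0 by rewrite expf_neq0 // oppr_eq0 oner_eq0.
have hsm : (-1 : R) ^+ m != 0 by rewrite expf_neq0 // oppr_eq0 oner_eq0.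
have ha : phi R ^+ n != 0 by rewrite expf_neq0.
have hb : phi R ^+ m != 0 by rewrite expf_neq0.
have hp := phi_gt0.
move: hd; set p := phi R in h0 ha hb hp *; move=> hd.
set a := p ^+ n in ha *; set b := p ^+ m in hb *.
set s := (-1) ^+ n in hs *; set sm := (-1) ^+ m in hsm *.
clearbody s sm a b p. field.
by rewrite h0 ha hb hs hsm gt_eqF ?addr_gt0 ?mulr_gt0.
Qed.

Lemma quad x y (w : R[i]) :
  csqrtF R x * (csqrtF R y * (csqrtF R y * (csqrtF R x * w)))
  = (Fib R x%:Z * Fib R y%:Z)%:C * w.
Proof.
rewrite [csqrtF R y * (csqrtF R x * _)]mulrCA.
rewrite [csqrtF R y * (csqrtF R x * _)]mulrCA.
rewrite [csqrtF R y * (csqrtF R y * _)]mulrA sqF mulrA sqF mulrA -rmorphM; reflexivity.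
Qed.

Lemma cB (x y : R) : (x - y)%:C = x%:C - y%:C.
Proof. by rewrite raddfB. Qed.

Lemma cM (x y : R) : (x * y)%:C = x%:C * y%:C.
Proof. by rewrite rmorphM. Qed.

Lemma c0 : (0 : R)%:C = 0.
Proof. by []. Qed.

Lemma sgnC (n : nat) : (-1) ^+ n = ((-1 : R) ^+ n)%:C.
Proof. by rewrite rmorphXn rmorphN1. Qed.

End S.

Theorem mainTheorem14 (R : realType) :
  [/\ comm (@Jp R) (@Jm R) = opmul (@sgnN2 R) (@F2Jz R),
      opmul (@sgnN2 R) (@F2Jz R) = opopp (opmul (@sgnN1 R) (@Fm2Jz R)),
      comm (@Jz R) (@Jp R) = @Jp R
    & comm (@Jz R) (@Jm R) = opopp (@Jm R)].
Proof.
split; apply: functional_extensionality => v;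
  apply: functional_extensionality => m1;
  apply: functional_extensionality => m2.
- have key : comm (@Jp R) (@Jm R) v m1 m2 =
    (Fib R m1%:Z * Fib R m2.+1%:Z - Fib R m1.+1%:Z * Fib R m2%:Z)%:C * v m1 m2.
  { rewrite /comm /opadd /opopp /opmul /Jp /Jm /opmul /bp1 /bp2 /b1 /b2.
    case: m1 => [|a]; case: m2 => [|b]; rewrite [LHS]/= ?quad.
    all: rewrite (cB R) mulrBl ?Fib0 ?mul0r ?mulr0 ?(c0 R) ?mul0r ?subr0 ?sub0r ?subrr //.
    - by rewrite (mulrC (Fib R 1%:Z)).
    - by rewrite (mulrC (Fib R b.+1%:Z)). }
  by rewrite key docagne /opmul /sgnN2 /F2Jz (sgnC R) (cM R) mulrA.
- rewrite /opmul /opopp /sgnN2 /sgnN1 /F2Jz /Fm2Jz !sgnC !mulrA -!rmorphM sgnswap.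
  by rewrite rmorphN mulNr.
- rewrite /comm /opadd /opopp /opmul /Jz /Jp /opscale /opadd /opopp /N1 /N2 /bp1 /b2 /opmul.
  case: m1 => [|a] /=; first by rewrite !mulr0 subrr mulr0 subr0.
  move: (csqrtF R a.+1) (csqrtF R m2.+1) (v a m2.+1) => x y w.
  by rewrite -!natr1; field.
- rewrite /comm /opadd /opopp /opmul /Jz /Jm /opscale /opadd /opopp /N1 /N2 /bp2 /b1 /opmul.
  case: m2 => [|b] /=; first by rewrite !mulr0 subrr mulr0 subr0 oppr0.
  move: (csqrtF R b.+1) (csqrtF R m1.+1) (v m1.+1 b) => x y w.
  by rewrite -!natr1; field.
Qed.
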